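(* For every positive integer $n$, every real $t\in[0,n)$ and every $p\in[0,1]$, if $B\sim\mathrm{Binom}(n,p)$ then \[ \mathbb{E}\Big[\exp\Big(t\cdot D\big((B/n,1-B/n)\,\|\,(p,1-p)\big)\Big)\Big]\leq\frac{1}{1-t/n}. \]
   Context: $D\big((q,1-q)\,\|\,(p,1-p)\big)=q\log\frac{q}{p}+(1-q)\log\frac{1-q}{1-p}$ is the Kullback--Leibler divergence between Bernoulli distributions (natural logarithm, convention $0\log(0/p)=0$). *)

(* Defs.v *)
From Stdlib Require Import Reals.
Open Scope R_scope.

Definition xlog_ratio (q p : R) : R :=
  if Req_EM_T q 0 then 0 else q * ln (q / p).

Definition KL_bern (q p : R) : R :=
  xlog_ratio q p + xlog_ratio (1 - q) (1 - p).

(* Expectation E[f(B)] for B ~ Binom(n,p):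
   sum_{k=0}^{n} C(n,k) p^k (1-p)^(n-k) f(k).  (sum_f_R0 g n = g 0 + ... + g n) *)
Definition binom_expect (n : nat) (p : R) (f : nat -> R) : R :=
  sum_f_R0 (fun k => C n k * p ^ k * (1 - p) ^ (n - k) * f k) n.

(* Main.v *)
Require Import Defs.
From Stdlib Require Import Reals Lra Lia.
Open Scope R_scope.

Module AlgPart.
From mathcomp Require Import all_boot all_order all_algebra ring zify.
From mathcomp Require Import Rstruct.
Set Implicit Arguments. Unset Strict Implicit. Unset Printing Implicit Defensive.
Import Order.TTheory GRing.Theory Num.Theory.
Local Open Scope ring_scope.

Section Alg.
Variable R : comNzRingType.

Definition Dm (m : nat) (f : nat -> R) :=
  \sum_(k < m.+1) (-1)^+(m-k) * 'C(m,k)%:R * f k.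

Lemma Dm_S m f : Dm m.+1 f = Dm m (fun k => f k.+1) - Dm m f.
Proof.
rewrite /Dm big_ord_recl /=.
under eq_bigr => i _ do rewrite /bump /= binS subSS natrD mulrDr mulrDl.
rewrite big_split /= addrA addrC; congr (_ + _).
have -> : (-1) ^+ (m.+1 - 0) * 'C(m.+1, 0)%:R * f 0%N
   + \sum_(i < m.+1) (-1) ^+ (m - i) * 'C(m, i.+1)%:R * f i.+1
   = \sum_(i < m.+2) (-1) ^+ (m.+1 - i) * 'C(m, i)%:R * f i.
  by rewrite [RHS]big_ord_recl /= !bin0 subn0.
rewrite big_ord_recr /= bin_small // mulr0n mulr0 mul0r addr0 -sumrN.
apply: eq_bigr => i _; rewrite subSn; last by rewrite -ltnS ltn_ord.
by rewrite exprS; ring.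
Qed.


Lemma Dm_ext m f g : (forall k, f k = g k) -> Dm m f = Dm m g.
Proof. by move=> H; apply: eq_bigr => i _; rewrite H. Qed.

Lemma Dm_lin m f g : Dm m (fun k => f k - g k) = Dm m f - Dm m g.
Proof. by rewrite /Dm -sumrB; apply: eq_bigr => i _; rewrite mulrBr. Qed.

Lemma Dm_sum m J (F : 'I_J -> nat -> R) :
  Dm m (fun k => \sum_(j < J) F j k) = \sum_(j < J) Dm m (F j).
Proof.
rewrite /Dm exchange_big /=; apply: eq_bigr => i _; by rewrite big_distrr.
Qed.

Lemma Dm_scal m c f : Dm m (fun k => c * f k) = c * Dm m f.
Proof. rewrite /Dm big_distrr; apply: eq_bigr => i _ /=; ring. Qed.

Lemma Dm_pow z m : forall x e, (e <= m)%N ->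
  Dm m (fun k => (x + k%:R * z)^+e) = if e == m then m`!%:R * z^+m else 0.
Proof.
elim: m => [|m IH] x e.
  rewrite leqn0 => /eqP ->; rewrite /Dm big_ord1 /=; ring.
move=> he; rewrite Dm_S.
rewrite (@Dm_ext _ _ (fun k => (z + (x + k%:R * z))^+e)); last first.
  by move=> k; congr (_ ^+ _); rewrite -addn1 natrD; ring.
rewrite -Dm_lin.
rewrite (@Dm_ext _ _ (fun k => \sum_(i < e) (z^+(e-i) * 'C(e,i)%:R) * (x + k%:R*z)^+i)); last first.
  move=> k; rewrite exprDn big_ord_recr /= subnn expr0 mul1r binn mulr1n addrK.
  by apply: eq_bigr => i _; rewrite -mulr_natr; ring.
rewrite Dm_sum.
rewrite (eq_bigr (fun i : 'I_e => z^+(e-i) * 'C(e,i)%:R * (if (i:nat) == m then m`!%:R * z^+m else 0))); last first.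
  move=> i _; rewrite Dm_scal IH //.
  by rewrite -ltnS (leq_trans (ltn_ord i) he).
case: (ltnP e m.+1) => [hem|hem].
  rewrite (ltn_eqF hem) big1 // => i _.
  by rewrite (ltn_eqF (leq_trans (ltn_ord i) hem)) mulr0.
have -> : e = m.+1 by apply/eqP; rewrite eqn_leq he hem.
rewrite eqxx big_ord_recr /= big1 ?add0r; last first.
  by move=> i _; rewrite (ltn_eqF (ltn_ord i)) mulr0.
rewrite eqxx binSn subSn // subnn factS natrM exprS expr0 [z ^+ m.+1]exprS; ring.
Qed.


Lemma sum_widen a b (F : nat -> R) : (a <= b)%N ->
  (forall i, (a <= i)%N -> F i = 0) -> \sum_(i < a) F i = \sum_(i < b) F i.
Proof.
move=> hab H; rewrite (big_ord_widen b F hab) big_mkcond.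
apply: eq_bigr => i _; case: ifP => // /negbT; rewrite -leqNgt => /H -> //.
Qed.

Lemma binCC n k i : ('C(n,k) * 'C(n-k,i) = 'C(n,i) * 'C(n-i,k))%N.
Proof.
case: (leqP (k + i) n) => h.
  have hk : (k <= n)%N by apply: leq_trans h; apply: leq_addr.
  have hi : (i <= n)%N by apply: leq_trans h; apply: leq_addl.
  have hik : (i <= n - k)%N by rewrite leq_subRL.
  have hki : (k <= n - i)%N by rewrite leq_subRL // addnC.
  have pos : (0 < k`! * i`! * (n-k-i)`!)%N by rewrite !muln_gt0 !fact_gt0.
  apply/eqP; rewrite -(eqn_pmul2r pos); apply/eqP.
  have e1 := bin_fact hk. have e2 := bin_fact hik.
  have e3 := bin_fact hi. have e4 := bin_fact hki.
  rewrite subnAC in e4.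
  transitivity ('C(n, k) * (k`! * ('C(n - k, i) * (i`! * (n - k - i)`!))))%N.
    by rewrite !mulnA; congr muln; rewrite -!mulnA; congr muln; rewrite mulnCA.
  rewrite e2 e1 -e3 -e4.
  rewrite !mulnA; congr muln; rewrite -!mulnA; congr muln. rewrite mulnCA. congr muln.
  by rewrite mulnC.
have L : forall a b, (a < b)%N -> 'C(a,b) = 0%N by move=> a b; apply: bin_small.
have Z1 : ('C(n,k) * 'C(n-k,i) = 0)%N.
  case: (leqP k n) => hk; last by rewrite L.
  by rewrite (L (n-k)%N i) ?muln0 //; lia.
have Z2 : ('C(n,i) * 'C(n-i,k) = 0)%N.
  case: (leqP i n) => hi; last by rewrite L.
  by rewrite (L (n-i)%N k) ?muln0 //; lia.
by rewrite Z1 Z2.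
Qed.

Lemma Tid (x z s : R) n :
  \sum_(k < n.+1) 'C(n,k)%:R * (x + k%:R*z)^+k * (s - (x + k%:R*z))^+(n-k)
  = \sum_(i < n.+1) 'C(n,i)%:R * (n-i)`!%:R * z^+(n-i) * s^+i.
Proof.
pose u (k : nat) := x + k%:R * z.
have E1 : forall k : 'I_n.+1, 'C(n,k)%:R * (x + k%:R*z)^+k * (s - (x + k%:R*z))^+(n-k)
   = \sum_(i < n.+1) s^+i * ('C(n,k)%:R * 'C(n-k,i)%:R * (u k)^+k * (- u k)^+(n-k-i)).
  move=> k; rewrite [s - _]addrC (exprDn _ s) big_distrr /=.
  set F := (fun i : nat => 'C(n, k)%:R * (x + k%:R * z) ^+ k *
    ((- (x + k%:R * z)) ^+ (n - k - i) * s ^+ i *+ 'C(n - k, i))).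
  transitivity (\sum_(i < n.+1) F i).
    apply: sum_widen; first by rewrite ltnS leq_subr.
    by move=> i hi; rewrite /F (@bin_small (n-k)%N i) // mulr0n mulr0.
  by apply: eq_bigr => i _; rewrite /F /u -mulr_natr; ring.
rewrite (eq_bigr _ (fun k _ => E1 k)) exchange_big /=.
apply: eq_bigr => i _.
rewrite -big_distrr /= mulrC; congr (_ * _).
under eq_bigr => k _ do rewrite -natrM binCC natrM.
rewrite -(@sum_widen (n-i).+1 n.+1 (fun k => 'C(n, i)%:R * 'C(n - i, k)%:R * u k ^+ k * (- u k) ^+ (n - k - i))); last first.
- by move=> k hk; rewrite (@bin_small (n-i)%N k) // mulr0n mulr0 mul0r mul0r.
- by rewrite ltnS leq_subr.
have := @Dm_pow z (n-i)%N x (n-i)%N (leqnn _); rewrite eqxx /Dm => H.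
rewrite -mulrA -H big_distrr /=; apply: eq_bigr => k _.
have hk : (k <= n - i)%N by rewrite -ltnS.
rewrite /u -subnDA addnC subnDA (exprNn (x + k%:R * z)).
have -> : (x + k%:R * z) ^+ (n - i) = (x + k%:R * z) ^+ k * (x + k%:R * z) ^+ (n - i - k).
  by rewrite -exprD subnKC.
ring.
Qed.

End Alg.

Lemma ffact_le_exp n j : (n ^_ j <= n ^ j)%N.
Proof.
elim: j n => [|j IH] n; first by [].
rewrite ffactnS expnS leq_mul //.
apply: leq_trans (IH n.-1) _; case: (j) => [|j'] //.
by rewrite leq_exp2r // leq_pred.
Qed.

Lemma geom_bound (R : realFieldType) (lam : R) m : 0 <= lam < 1 ->
  \sum_(j < m) lam ^+ j <= (1 - lam)^-1.
Proof.
case/andP=> h0 h1.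
have pos : 0 < 1 - lam by rewrite subr_gt0.
have E : (\sum_(j < m) lam ^+ j) * (1 - lam) = 1 - lam ^+ m.
  elim: m => [|m IH]; first by rewrite big_ord0 expr0; ring.
  by rewrite big_ord_recr /= mulrDl IH exprS; ring.
rewrite -(ler_pM2r pos) E mulVf ?gt_eqF //.
by rewrite lerBlDr lerDl exprn_ge0.
Qed.

Lemma Tbound (R : realFieldType) n (x lam : R) : (0 < n)%N -> 0 <= lam < 1 ->
  \sum_(k < n.+1) 'C(n,k)%:R * (x + k%:R*(lam / n%:R))^+k
     * (1 - (x + k%:R*(lam/n%:R)))^+(n-k) <= (1 - lam)^-1.
Proof.
move=> hn hl; case/andP: (hl) => h0 h1.
rewrite Tid.
have npos : (0 : R) < n%:R by rewrite ltr0n.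
apply: le_trans (geom_bound n.+1 hl).
rewrite (reindex_inj rev_ord_inj) /=.
apply: ler_sum => i _; rewrite expr1n mulr1 subKn; last by rewrite -ltnS.
rewrite bin_sub; last by rewrite -ltnS.
rewrite -natrM bin_ffact expr_div_n.
have hn2 : (0 : R) < n%:R ^+ i by rewrite exprn_gt0.
have hf : (n ^_ i)%:R <= n%:R ^+ i :> R by rewrite -natrX ler_nat ffact_le_exp.
rewrite mulrA -mulrA [_ * (n%:R ^+ i)^-1]mulrC mulrA.
apply: ler_piMl; first by rewrite exprn_ge0.
by rewrite ler_pdivrMr // mul1r.
Qed.

Lemma sumE (f : nat -> R) n : sum_f_R0 f n = \sum_(k < n.+1) f k.
Proof.
elim: n => [|n IH] /=; first by rewrite big_ord1.
by rewrite IH [RHS]big_ord_recr.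
Qed.

Lemma factE' n : Factorial.fact n = n`!.
Proof. by elim: n => [|n IH] //=; rewrite factS -IH. Qed.

Lemma CE n k : (k <= n)%N -> C n k = 'C(n,k)%:R.
Proof.
move=> hk; rewrite /C !factE' !INRE RdivE -(bin_fact hk) !natrM.
have h1 : k`!%:R != 0 :> R by rewrite pnatr_eq0 -lt0n fact_gt0.
have h2 : (n-k)`!%:R != 0 :> R by rewrite pnatr_eq0 -lt0n fact_gt0.
rewrite RmultE; have -> : Nat.sub n k = (n - k)%N by []. by field; rewrite h1 h2.
Qed.

Lemma bridge (n : nat) (x lam : R) : n <> 0%N -> Rle 0 lam -> Rlt lam 1 ->
 Rle (sum_f_R0 (fun k => Rmult (Rmult (C n k) (pow (Rplus x (Rmult (INR k) (Rdiv lam (INR n)))) k))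
     (pow (Rminus 1 (Rplus x (Rmult (INR k) (Rdiv lam (INR n))))) (Nat.sub n k))) n)
   (Rinv (Rminus 1 lam)).
Proof.
move=> hn /RleP h0 /RltP h1; apply/RleP; rewrite sumE.
have hn' : (0 < n)%N by rewrite lt0n; apply/eqP.
apply: le_trans (Tbound x hn' _); last by rewrite h0 h1.
rewrite le_eqVlt; apply/orP; left; apply/eqP.
apply: eq_bigr => k _; rewrite CE; last by rewrite -ltnS.
by rewrite !RpowE !INRE RdivE.
Qed.

End AlgPart.

Lemma ln_le_sub1 y : 0 < y -> ln y <= y - 1.
Proof.
intros Hy. pose proof (exp_ineq1_le (ln y)) as H. rewrite exp_ln in H; lra.
Qed.

Lemma amgm (w lam : R) : 0 < w -> 0 <= lam <= 1 -> exp (lam * ln w) <= 1 - lam + lam * w.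
Proof.
intros Hw [Hl0 Hl1].
set (v := 1 - lam + lam * w).
assert (Hv : 0 < v).
{ unfold v. destruct (Rle_lt_or_eq_dec 0 lam Hl0) as [Hl|Hl].
  - assert (0 < lam * w) by (apply Rmult_lt_0_compat; lra). lra.
  - subst lam. lra. }
assert (H1 := ln_le_sub1 (w / v) (Rdiv_lt_0_compat _ _ Hw Hv)).
assert (H2 := ln_le_sub1 (/ v) (Rinv_0_lt_compat _ Hv)).
unfold Rdiv in H1; rewrite ln_mult, ln_Rinv in H1 by (try apply Rinv_0_lt_compat; assumption).
rewrite ln_Rinv in H2 by assumption.
assert (H3 : lam * (ln w - ln v) + (1 - lam) * (- ln v)
   <= lam * (w / v - 1) + (1 - lam) * (/ v - 1)).
{ apply Rplus_le_compat; apply Rmult_le_compat_l; lra. }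
assert (H4 : lam * (w / v - 1) + (1 - lam) * (/ v - 1) = 0).
{ unfold v in *. field. lra. }
assert (H5 : lam * ln w <= ln v) by lra.
rewrite <- (exp_ln v Hv).
destruct (Rle_lt_or_eq_dec _ _ H5) as [H6|H6].
- left; apply exp_increasing; exact H6.
- rewrite H6; lra.
Qed.

Lemma exp_mult_nat k y : exp (INR k * y) = exp y ^ k.
Proof.
induction k as [|k IH].
- simpl. rewrite Rmult_0_l. apply exp_0.
- rewrite S_INR. replace ((INR k + 1) * y) with (INR k * y + y) by ring.
  rewrite exp_plus, IH. simpl. ring.
Qed.

Lemma fac k n (a q lam : R) : (0 < n)%nat -> 0 <= a -> 0 <= q -> 0 <= lam < 1 ->
  INR k = INR n * q ->
  a ^ k * exp (lam * INR n * xlog_ratio q a) <= ((1 - lam) * a + lam * q) ^ k.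
Proof.
intros Hn Ha Hq [Hl0 Hl1] Hk.
assert (HN : 0 < INR n) by (apply lt_0_INR; exact Hn).
unfold xlog_ratio. destruct (Req_EM_T q 0) as [Hq0|Hq0].
- subst q. rewrite Rmult_0_r in Hk. replace k with 0%nat by (apply INR_eq; rewrite Hk; reflexivity).
  simpl. rewrite Rmult_0_r, exp_0. lra.
- assert (Hqp : 0 < q) by lra.
  destruct k as [|k'].
  + simpl in Hk. assert (0 < INR n * q) by (apply Rmult_lt_0_compat; lra). lra.
  + destruct (Req_dec a 0) as [Ha0|Ha0].
    * subst a. rewrite pow_i by lia. rewrite Rmult_0_l. apply pow_le.
      assert (0 <= lam * q) by (apply Rmult_le_pos; lra). lra.
    * assert (Hap : 0 < a) by lra.
      replace (lam * INR n * (q * ln (q / a))) with (INR (S k') * (lam * ln (q / a)))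
        by (rewrite Hk; ring).
      rewrite exp_mult_nat, <- Rpow_mult_distr.
      apply pow_incr. split.
      { apply Rmult_le_pos; [lra| left; apply exp_pos]. }
      assert (H := amgm (q / a) lam (Rdiv_lt_0_compat _ _ Hqp Hap) (conj Hl0 (Rlt_le _ _ Hl1))).
      apply Rmult_le_compat_l with (r := a) in H; [|lra].
      replace (a * (1 - lam + lam * (q / a))) with ((1 - lam) * a + lam * q) in H
        by (field; lra).
      exact H.
Qed.

Lemma C_nonneg n k : 0 <= C n k.
Proof.
unfold C. apply Rmult_le_pos; [apply pos_INR|].
left; apply Rinv_0_lt_compat; apply Rmult_lt_0_compat; apply lt_0_INR; apply Factorial.lt_O_fact.
Qed.

Theorem proposition2p5 :
  forall (n : nat) (t p : R),
    (0 < n)%nat ->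
    0 <= t < INR n ->
    0 <= p <= 1 ->
    binom_expect n p (fun k => exp (t * KL_bern (INR k / INR n) p))
      <= 1 / (1 - t / INR n).
Proof.
intros n t p Hn [Ht0 Htn] [Hp0 Hp1].
assert (HN : 0 < INR n) by (apply lt_0_INR; exact Hn).
set (lam := t / INR n).
assert (Hl0 : 0 <= lam) by (unfold lam; apply Rmult_le_pos; [lra| left; apply Rinv_0_lt_compat; lra]).
assert (Hl1 : lam < 1).
{ unfold lam. apply (Rmult_lt_reg_r (INR n)); [lra|]. field_simplify; lra. }
assert (Ht : t = lam * INR n) by (unfold lam; field; lra).
unfold binom_expect.
apply Rle_trans with (sum_f_R0 (fun k => C n k * ((1 - lam) * p + INR k * (lam / INR n)) ^ k
   * (1 - ((1 - lam) * p + INR k * (lam / INR n))) ^ (n - k)) n).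
- apply sum_Rle. intros k Hk.
  set (q := INR k / INR n).
  assert (HkN : INR k <= INR n) by (apply le_INR; exact Hk).
  assert (Hq0 : 0 <= q) by (unfold q; apply Rmult_le_pos; [apply pos_INR| left; apply Rinv_0_lt_compat; lra]).
  assert (Hq1 : q <= 1).
  { unfold q. apply (Rmult_le_reg_r (INR n)); [lra|]. field_simplify; lra. }
  assert (Hkq : INR k = INR n * q) by (unfold q; field; lra).
  assert (Hkq' : INR (n - k) = INR n * (1 - q)) by (rewrite minus_INR by exact Hk; rewrite Hkq; ring).
  assert (F1 := fac k n p q lam Hn Hp0 Hq0 (conj Hl0 Hl1) Hkq).
  assert (F2 := fac (n - k) n (1 - p) (1 - q) lam Hn ltac:(lra) ltac:(lra) (conj Hl0 Hl1) Hkq').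
  unfold KL_bern. rewrite Ht, Rmult_plus_distr_l, exp_plus.
  replace ((1 - lam) * p + INR k * (lam / INR n)) with ((1 - lam) * p + lam * q)
    by (unfold q; field; lra).
  replace (1 - ((1 - lam) * p + lam * q)) with ((1 - lam) * (1 - p) + lam * (1 - q)) by ring.
  replace (C n k * p ^ k * (1 - p) ^ (n - k) *
     (exp (lam * INR n * xlog_ratio q p) * exp (lam * INR n * xlog_ratio (1 - q) (1 - p))))
    with (C n k * (p ^ k * exp (lam * INR n * xlog_ratio q p)) *
          ((1 - p) ^ (n - k) * exp (lam * INR n * xlog_ratio (1 - q) (1 - p)))) by ring.
  apply Rmult_le_compat.
  + apply Rmult_le_pos; [apply C_nonneg|]. apply Rmult_le_pos; [apply pow_le; lra| left; apply exp_pos].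
  + apply Rmult_le_pos; [apply pow_le; lra| left; apply exp_pos].
  + apply Rmult_le_compat_l; [apply C_nonneg| exact F1].
  + exact F2.
- assert (Hn' : n <> 0%nat) by lia.
  pose proof (@AlgPart.bridge n ((1 - lam) * p) lam Hn' Hl0 Hl1) as B.
  replace (1 / (1 - lam)) with (/ (1 - lam)) by (field; lra).
  exact B.
Qed.
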